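(* Assume $\inf_{x\in X}\mu(B_x(1/2))>0$. If $T\in\mathscr{E}(X)$ is a controlled operator, $\xi$ is a coarse filter on $X$, and $\lim_{x\to\xi}\|\mathbf{1}_{B_x(1)}T\|=0$, then $T\in\mathscr{J}_\xi(X)$.
   Context: $(X,d)$ is a non-compact proper metric space, $B_x(r)=\{y:d(x,y)\le r\}$, and $\mu$ is a Radon measure with support $X$ such that $\mu(B_x(r))>0$ and $\sup_x\mu(B_x(r))<\infty$ for all $r>0$. On $L^2(X,\mu)$, $\mathbf{1}_A$ is multiplication by the characteristic function of measurable $A$. An operator $T$ is controlled if there is $r>0$ such that $\mathbf{1}_FT\mathbf{1}_G=0$ for all closed $F,G$ with $d(F,G)>r$. A kernel $k$ on $X\times X$ is controlled if $k(x,y)=0$ whenever $d(x,y)>r$ for some $r$; $\mathscr{E}(X)$ is the norm closure of the operators $(Op(k)f)(x)=\int k(x,y)f(y)d\mu(y)$, $k$ bounded, uniformly continuous and controlled. For a filter $\xi$, $\lim_{x\to\xi}f(x)=0$ means $\{x:|f(x)|<\varepsilon\}\in\xi$ for all $\varepsilon>0$. With $F^{(r)}=\{x:\inf_{y\notin F}d(x,y)>r\}$, $\xi$ is coarse if $F\in\xi\Rightarrow F^{(r)}\in\xi$ for all $r>0$. $\mathscr{J}_\xi(X)=\{T\in\mathscr{E}(X):\inf_F\|\mathbf{1}_FT\|=0\}$, infimum over measurable $F\in\xi$. *)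

(* Defs.v *)
(* Operators on the complex Hilbert space L^2(X,mu)
   are modelled as maps on complex-valued functions (representatives),
   required to preserve L^2, respect mu-a.e. equality, be linear (a.e.) and
   bounded; operator identities are understood mu-a.e. on L^2 inputs. *)
From mathcomp Require Import all_boot all_order all_algebra.
From mathcomp Require Import all_classical all_reals all_analysis.
From mathcomp Require Import complex.
Import Order.TTheory GRing.Theory Num.Theory.

Set Implicit Arguments.
Unset Strict Implicit.
Unset Printing Implicit Defensive.

Local Open Scope classical_set_scope.
Local Open Scope ring_scope.

Definition csq (R : realType) (z : R[i]) : R :=
  complex.Re z ^+ 2 + complex.Im z ^+ 2.
Definition cabs (R : realType) (z : R[i]) : R := Num.sqrt (csq z).

Definition is_metric (X : Type) (R : realType) (d : X -> X -> R) : Prop :=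
  (forall x, d x x = 0) /\ (forall x y, d x y = 0 -> x = y) /\
  (forall x y, d x y = d y x) /\ (forall x y z, d x z <= d x y + d y z).

Definition cball (X : Type) (R : realType) (d : X -> X -> R) (x : X) (r : R)
  : set X := [set y | d x y <= r].

Definition mopen (X : Type) (R : realType) (d : X -> X -> R) (U : set X) : Prop :=
  forall x, U x -> exists2 r : R, 0 < r & [set y | d x y < r] `<=` U.

Definition mclosed (X : Type) (R : realType) (d : X -> X -> R) (F : set X) : Prop :=
  mopen d (~` F).

Definition mcompact (X : Type) (R : realType) (d : X -> X -> R) (K : set X) : Prop :=
  forall (I : Type) (U : I -> set X), (forall i, mopen d (U i)) ->
    K `<=` \bigcup_i U i ->
    exists J : set I, finite_set J /\ K `<=` \bigcup_(i in J) U i.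

(* d(F,G) > r, with d(F,G) = inf_{x in F, y in G} d(x,y) (= +oo if empty) *)
Definition dist_gt (X : Type) (R : realType) (d : X -> X -> R)
  (F G : set X) (r : R) : Prop :=
  exists2 s : R, r < s & forall x y, F x -> G y -> s <= d x y.

(* F^(r) = {x | inf_{y notin F} d(x,y) > r} *)
Definition inner_nbhd (X : Type) (R : realType) (d : X -> X -> R)
  (F : set X) (r : R) : set X :=
  [set x | exists2 s : R, r < s & forall y, ~ F y -> s <= d x y].

Definition standing_assumptions (dsp : measure_display) (X : measurableType dsp)
  (R : realType) (d : X -> X -> R) (mu : {measure set X -> \bar R}) : Prop :=
  [/\ is_metric d,
      (forall A : set X, measurable A <-> smallest (sigma_algebra setT) (mopen d) A),
      (forall x r, mcompact d (cball d x r)) /\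
      ~ mcompact d setT,
      [/\ (forall x, exists U, [/\ mopen d U, U x & (mu U < +oo)%E]),
          (forall A, measurable A ->
             mu A = ereal_inf [set mu U | U in [set U | mopen d U /\ A `<=` U]]) &
          (forall U, mopen d U ->
             mu U = ereal_sup [set mu K | K in [set K | mcompact d K /\ K `<=` U]])] /\
      (forall U, mopen d U -> U !=set0 -> (0 < mu U)%E) &
      (forall r : R, 0 < r ->
         (forall x, (0 < mu (cball d x r))%E) /\
         exists M : R, forall x, (mu (cball d x r) <= M%:E)%E)].

Section L2.
Context (dsp : measure_display) (X : measurableType dsp) (R : realType)
        (mu : {measure set X -> \bar R}).

Definition cmeas (f : X -> R[i]) : Prop :=
  measurable_fun setT (fun x => complex.Re (f x)) /\
  measurable_fun setT (fun x => complex.Im (f x)).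

Definition L2 (f : X -> R[i]) : Prop :=
  cmeas f /\ (\int[mu]_x (csq (f x))%:E < +oo)%E.

Definition norm2 (f : X -> R[i]) : R :=
  Num.sqrt (fine (\int[mu]_x (csq (f x))%:E)).

Definition ae_eq (f g : X -> R[i]) : Prop := {ae mu, forall x, f x = g x}.

Definition is_bounded_op (T : (X -> R[i]) -> (X -> R[i])) : Prop :=
  [/\ (forall f, L2 f -> L2 (T f)),
      (forall f g, L2 f -> L2 g -> ae_eq f g -> ae_eq (T f) (T g)),
      (forall (a : R[i]) f g, L2 f -> L2 g ->
         ae_eq (T (fun x => a * f x + g x)) (fun x => a * T f x + T g x)) &
      exists M : R, forall f, L2 f -> norm2 (T f) <= M * norm2 f].

Definition opnorm (T : (X -> R[i]) -> (X -> R[i])) : R :=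
  sup [set norm2 (T f) | f in [set f | L2 f /\ norm2 f <= 1]].

Definition ind (A : set X) (f : X -> R[i]) : X -> R[i] :=
  fun x => if `[< A x >] then f x else 0.

Definition opsub (T S : (X -> R[i]) -> (X -> R[i])) : (X -> R[i]) -> (X -> R[i]) :=
  fun f x => T f x - S f x.

Definition cint (g : X -> R[i]) : R[i] :=
  complex.Complex (Rintegral mu setT (fun y => complex.Re (g y)))
                  (Rintegral mu setT (fun y => complex.Im (g y))).

Definition Op (k : X -> X -> R[i]) : (X -> R[i]) -> (X -> R[i]) :=
  fun f x => cint (fun y => k x y * f y).

Variable d : X -> X -> R.

Definition good_kernel (k : X -> X -> R[i]) : Prop :=
  [/\ (exists M : R, forall x y, cabs (k x y) <= M),
      (forall e : R, 0 < e -> exists2 del : R, 0 < del &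
         forall x y x' y', d x x' < del -> d y y' < del ->
           cabs (k x y - k x' y') < e) &
      (exists r : R, forall x y, r < d x y -> k x y = 0)].

(* the algebra E(X): norm closure of {Op k | k good} *)
Definition in_E (T : (X -> R[i]) -> (X -> R[i])) : Prop :=
  is_bounded_op T /\
  forall e : R, 0 < e -> exists k, good_kernel k /\ opnorm (opsub T (Op k)) < e.

Definition controlled_op (T : (X -> R[i]) -> (X -> R[i])) : Prop :=
  exists2 r : R, 0 < r &
    forall F G : set X, mclosed d F -> mclosed d G -> dist_gt d F G r ->
      forall f, L2 f -> ae_eq (ind F (T (ind G f))) (fun _ => 0).

Definition coarse_filter (xi : set_system X) : Prop :=
  Filter xi /\ forall (F : set X) (r : R), 0 < r -> xi F -> xi (inner_nbhd d F r).

Definition in_J (xi : set_system X) (T : (X -> R[i]) -> (X -> R[i])) : Prop :=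
  in_E T /\
  forall e : R, 0 < e -> exists F : set X,
    [/\ measurable F, xi F & opnorm (fun f => ind F (T f)) < e].

End L2.

(* Main.v *)
From HB Require Import structures.
Require Import Defs.
From mathcomp Require Import all_boot all_order all_algebra.
From mathcomp Require Import all_classical all_reals all_analysis.
From mathcomp Require Import complex.
From mathcomp Require Import measurable_realfun.
From mathcomp Require Import ring lra.
Import Order.TTheory GRing.Theory Num.Theory.
Local Open Scope classical_set_scope.
Local Open Scope ring_scope.

Set Implicit Arguments.

Section metric.
Context (X : Type) (R : realType) (d : X -> X -> R) (hd : is_metric d).

Lemma md0 x : d x x = 0. Proof. by case: hd. Qed.
Lemma mdsym x y : d x y = d y x. Proof. by case: hd => _ [_ []]. Qed.
Lemma mdtri x y z : d x z <= d x y + d y z. Proof. by case: hd => _ [_ [_]]. Qed.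
Lemma mdge0 x y : 0 <= d x y.
Proof.
have := mdtri x y x; rewrite md0 (mdsym y x) -mulr2n => h.
by rewrite -(@pmulrn_lge0 _ _ 2).
Qed.

Lemma mball_open x r : mopen d [set y | d x y < r].
Proof.
move=> y /= hy; exists (r - d x y); first by rewrite subr_gt0.
move=> z /= hz; have := mdtri x y z; lra.
Qed.

Lemma mgt_open x r : mopen d [set y | r < d x y].
Proof.
move=> y /= hy; exists (d x y - r); first by rewrite subr_gt0.
move=> z /= hz; have := mdtri x z y; rewrite (mdsym z y) => h; lra.
Qed.

Lemma cball_closed x r : mclosed d (cball d x r).
Proof.
rewrite /mclosed (_ : ~` cball d x r = [set y | r < d x y]); first exact: mgt_open.
by apply/seteqP; split => y /=; rewrite /cball /= ltNge => /negP.
Qed.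

Lemma mge_closed x r : mclosed d [set y | r <= d x y].
Proof.
rewrite /mclosed (_ : ~` _ = [set y | d x y < r]); first exact: mball_open.
by apply/seteqP; split => y /=; rewrite ltNge => /negP.
Qed.

Lemma inner_open F r : mopen d (inner_nbhd d F r).
Proof.
move=> x [s rs hs]; exists ((s - r) / 2); first by rewrite divr_gt0 // subr_gt0.
move=> z /= hz; exists (s - (s - r) / 2).
  lra.
move=> y Fy; have := hs y Fy => h; have := mdtri x z y; lra.
Qed.

End metric.

Lemma le_of_lt_inv (R : realType) (t a : R) :
  (forall k : nat, t < a + 2 * (k.+1%:R)^-1) -> t <= a.
Proof.
move=> h; rewrite leNgt; apply/negP => hat.
have := truncnS_gt (2 / (t - a)); set k := Num.Def.trunc _ => hk.
have := h k.
have kp : (0 : R) < k.+1%:R by rewrite ltr0Sn.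
have ta : 0 < t - a by rewrite subr_gt0.
rewrite ltr_pdivrMr // in hk.
have : 2 * k.+1%:R^-1 < t - a.
  by rewrite ltr_pdivrMr // mulrC.
move: (2 / k.+1%:R) => w h1 h2; lra.
Qed.

Section meas.
Context (dsp : measure_display) (X : measurableType dsp) (R : realType)
  (d : X -> X -> R) (mu : {measure set X -> \bar R}) (hS : standing_assumptions d mu).

Lemma hmet : is_metric d. Proof. by case: hS. Qed.

Lemma open_meas U : mopen d U -> measurable U.
Proof. case: hS => _ hB _ _ _ hU; by apply/hB => S [_]; apply. Qed.

Lemma closed_meas F : mclosed d F -> measurable F.
Proof. by move=> /open_meas /measurableC; rewrite setCK. Qed.

Lemma cball_meas x r : measurable (cball d x r).
Proof. exact/closed_meas/cball_closed/hmet. Qed.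

Lemma hcompact x r : mcompact d (cball d x r).
Proof. by case: hS => _ _ [] . Qed.

Lemma hbound (r : R) : 0 < r -> exists M : R, forall x, (mu (cball d x r) <= M%:E)%E.
Proof. by case: hS => _ _ _ _ /(_ r) h /h []. Qed.

Lemma mu_sigma_finite : sigma_finite setT mu.
Proof.
exists (fun n => cball d point n.+1%:R).
  apply/seteqP; split => // y _.
  exists (Num.Def.trunc (d point y)) => //; rewrite /cball /=.
  by apply: ltW; exact: truncnS_gt.
move=> n; split; first exact: cball_meas.
have [M hM] := @hbound n.+1%:R (ltr0Sn R n).
exact: (le_lt_trans (hM _)) (ltry _).
Qed.


Lemma cover_fin (m k : nat) : exists J : set X, finite_set J /\
  cball d point m%:R `<=` \bigcup_(z in J) [set y | d z y < k.+1%:R^-1].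
Proof.
have hc : cball d point m%:R `<=` \bigcup_z [set y | d z y < k.+1%:R^-1].
  move=> y _; exists y => //=.
  by rewrite md0 ?invr_gt0 ?ltr0Sn //; exact: hmet.
have [J [fJ hJ]] := @hcompact point m%:R X (fun z => [set y | d z y < k.+1%:R^-1])
  (fun z => mball_open hmet z _) hc.
by exists J.
Qed.

Lemma Ed_meas (a : R) : measurable [set z : X * X | d z.1 z.2 <= a].
Proof.
have /choice [J hJ] : forall mk : nat * nat, exists J : set X, finite_set J /\
  cball d point mk.1%:R `<=` \bigcup_(z in J) [set y | d z y < mk.2.+1%:R^-1].
  by move=> [m k]; exact: cover_fin.
have -> : [set z : X * X | d z.1 z.2 <= a] =
  \bigcap_(k in setT) \bigcup_(m in setT) \bigcup_(z in J (m, k))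
     ([set x | d z x < k.+1%:R^-1] `*` [set y | d z y < a + k.+1%:R^-1]).
  apply/seteqP; split.
  - move=> [x y] /= hxy k _.
    have hx : cball d point (Num.Def.trunc (d point x)).+1%:R x.
      by rewrite /cball /=; apply: ltW; exact: truncnS_gt.
    exists (Num.Def.trunc (d point x)).+1 => //.
    have [_ /(_ x hx) [z Jz /= hz]] := hJ ((Num.Def.trunc (d point x)).+1, k).
    exists z => //; split => //=.
    have := mdtri hmet z x y; move: (k.+1%:R^-1) hz => w; lra.
  - move=> [x y] /= h; apply: le_of_lt_inv => k.
    have [m _ [z _ [/= h1 h2]]] := h k I.
    have := mdtri hmet x z y; rewrite (mdsym hmet x z).
    move: (k.+1%:R^-1) h1 h2 => w; lra.
apply: bigcapT_measurable => k; apply: bigcupT_measurable => m.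
apply: fin_bigcup_measurable; first by case: (hJ (m, k)).
move=> z _; apply: measurableX; apply: open_meas; exact: mball_open hmet _ _.
Qed.

End meas.

Section mk.
Context (dsp : measure_display) (X : measurableType dsp) (R : realType)
  (mu : {measure set X -> \bar R}) (H : sigma_finite setT mu).
Definition smu (H' : sigma_finite setT mu) : set X -> \bar R := mu.
HB.instance Definition _ := Measure.copy (smu H) mu.
HB.instance Definition _ := @Measure_isSigmaFinite.Build _ _ _ (smu H) H.
End mk.

Section estA.
Context (dsp : measure_display) (X : measurableType dsp) (R : realType)
  (d : X -> X -> R) (mu : {measure set X -> \bar R}) (hS : standing_assumptions d mu).
Let nu : {sigma_finite_measure set X -> \bar R} := @smu dsp X R mu (mu_sigma_finite hS).

Lemma int_nu (f : X -> \bar R) : (\int[nu]_x f x = \int[mu]_x f x)%E.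
Proof. by []. Qed.

Local Open Scope ereal_scope.

Lemma swapT (f : (X * X)%type -> \bar R) : measurable_fun setT f -> (forall z, 0 <= f z) ->
  \int[mu]_x \int[mu]_y f (x, y) = \int[mu]_y \int[mu]_x f (x, y).
Proof. by move=> mf f0; exact: (sfinite_Fubini nu nu f f0 mf). Qed.

Lemma mF_meas (f : (X * X)%type -> \bar R) : measurable_fun setT f -> (forall z, 0 <= f z) ->
  measurable_fun setT (fun x => \int[mu]_y f (x, y)).
Proof. by move=> mf f0; exact: (@measurable_fun_fubini_tonelli_F _ _ _ _ _ nu f mf f0). Qed.

Lemma mG_meas (f : (X * X)%type -> \bar R) : measurable_fun setT f -> (forall z, 0 <= f z) ->
  measurable_fun setT (fun y => \int[mu]_x f (x, y)).
Proof. by move=> mf f0; exact: (@measurable_fun_fubini_tonelli_G _ _ _ _ _ nu f mf f0). Qed.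

Lemma ind_ge0 (A : set X) y : 0 <= (\1_A y : R)%:E.
Proof. by rewrite lee_fin. Qed.

Lemma int_indic_mul (A : set X) (k : \bar R) : measurable A -> 0 <= k ->
  \int[mu]_x ((\1_A x : R)%:E * k) = mu A * k.
Proof.
move=> mA k0; rewrite ge0_integralZr //; last first.
  by apply/measurable_EFinP; exact: measurable_indic.
by rewrite integral_indic // setIT.
Qed.


Lemma estA (c M eps2 rho : R) (G H : X -> \bar R) (F : set X) :
  (0 < c)%R -> (forall y, c%:E <= mu (cball d y (1/2))) ->
  (0 <= M)%R -> (forall y, mu (cball d y rho) <= M%:E) -> (0 <= eps2)%R ->
  measurable F -> measurable_fun setT G -> measurable_fun setT H ->
  (forall y, 0 <= G y) -> (forall y, 0 <= H y) ->
  (forall x y, F y -> (d x y <= 1/2)%R ->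
     \int[mu]_z ((\1_(cball d x 1) z : R)%:E * G z) <=
     eps2%:E * \int[mu]_z ((\1_(cball d x rho) z : R)%:E * H z)) ->
  c%:E * \int[mu]_y ((\1_F y : R)%:E * G y) <= (eps2 * M)%:E * \int[mu]_y H y.
Proof.
move=> c0 hc M0 hM e0 mF mG mH G0 H0 hyp.
have hm := hmet hS.
pose E (a : R) := [set z : (X * X)%type | (d z.1 z.2 <= a)%R].
have mE a : measurable (E a) := Ed_meas hS a.
pose f1 (z : (X * X)%type) := (\1_(E (1/2)) z : R)%:E * ((\1_F z.2 : R)%:E * G z.2).
pose f2 (z : (X * X)%type) := (\1_(E rho) z : R)%:E * H z.2.
have mFG : measurable_fun setT (fun y => (\1_F y : R)%:E * G y).
  by apply: emeasurable_funM => //; apply/measurable_EFinP; exact: measurable_indic.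
have FG0 y : 0 <= (\1_F y : R)%:E * G y by rewrite mule_ge0 // lee_fin.
have mf1 : measurable_fun setT f1.
  apply: emeasurable_funM; first by apply/measurable_EFinP; exact: measurable_indic.
  exact: measurableT_comp mFG measurable_snd.
have f10 z : 0 <= f1 z by rewrite mule_ge0 // lee_fin.
have mf2 : measurable_fun setT f2.
  apply: emeasurable_funM; first by apply/measurable_EFinP; exact: measurable_indic.
  exact: measurableT_comp mH measurable_snd.
have f20 z : 0 <= f2 z by rewrite mule_ge0 // lee_fin.
have indE a x y : (\1_(E a) (x, y) : R) = \1_(cball d y a) x.
  rewrite /indic (_ : ((x, y) \in E a) = (x \in cball d y a)) //.
  by apply/idP/idP => /set_mem h; apply/mem_set; move: h; rewrite /E /cball /= (mdsym hm x y).
have indE' a x y : (\1_(E a) (x, y) : R) = \1_(cball d x a) y.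
  by [].
apply: (@le_trans _ _ (\int[mu]_y \int[mu]_x f1 (x, y))).
  rewrite -ge0_integralZl_EFin //; last exact: ltW.
  apply: ge0_le_integral => //.
  - by move=> y _; rewrite mule_ge0 // lee_fin ltW.
  - exact: measurable_funeM.
  - exact: mG_meas.
  move=> y _.
  have -> : \int[mu]_x f1 (x, y) = \int[mu]_x ((\1_(cball d y (1/2)) x : R)%:E * ((\1_F y : R)%:E * G y)).
    by apply: eq_integral => x _; rewrite /f1 indE.
  rewrite (int_indic_mul _ _ (cball_meas hS y (1/2)) (FG0 y)).
  by apply: lee_wpmul2r.
rewrite -swapT //.
apply: (@le_trans _ _ (\int[mu]_x (eps2%:E * \int[mu]_y f2 (x, y)))).
  apply: ge0_le_integral => //.
  - by move=> x _; exact: integral_ge0.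
  - exact: mF_meas.
  - by apply: measurable_funeM; exact: mF_meas.
  move=> x _.
  have e2 : \int[mu]_y f2 (x, y) = \int[mu]_z ((\1_(cball d x rho) z : R)%:E * H z).
    by apply: eq_integral => y _; rewrite /f2 indE'.
  rewrite e2.
  case: (pselect (exists y, F y /\ (d x y <= 1/2)%R)) => [[y [Fy dxy]] | hno].
    apply: le_trans (hyp x y Fy dxy); apply: ge0_le_integral => //.
    - exact: measurable_fun_pair2 mf1.
    - apply: emeasurable_funM; last exact: mG.
      apply/measurable_EFinP; apply: measurable_indic; exact: (cball_meas hS).
    move=> z _; rewrite /f1 indE' /indic /=.
    case: (boolP (z \in cball d x (1/2))) => h1 /=; last by rewrite mul0e; apply: mule_ge0 => //; rewrite lee_fin.
    have h1' : z \in cball d x 1.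
      rewrite inE /cball /=; move: h1; rewrite inE /cball /= => h1; apply: le_trans h1 _; lra.
    rewrite h1' /= !mul1e.
    by case: (z \in F) => /=; rewrite ?mul1e ?mul0e.
  rewrite integral0_eq; first by rewrite mule_ge0 // ?lee_fin // integral_ge0 // => z _; rewrite mule_ge0 // lee_fin.
  move=> z _; rewrite /f1 indE' /indic /=.
  case: (boolP (z \in cball d x (1/2))) => h1 /=; first last.
    by rewrite mul0e.
  case: (boolP (z \in F)) => h2 /=; last by rewrite mul0e mule0.
  exfalso; apply: hno; exists z; split; first by move: h2; rewrite inE.
  by move: h1; rewrite inE.
rewrite ge0_integralZl_EFin //; last exact: mF_meas.
rewrite swapT //.
have -> : (eps2 * M)%:E * \int[mu]_y H y = eps2%:E * \int[mu]_y (M%:E * H y).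
  by rewrite ge0_integralZl_EFin // EFinM muleA.
apply: lee_wpmul2l; first by rewrite lee_fin.
apply: ge0_le_integral => //.
- by move=> y _; exact: integral_ge0.
- exact: mG_meas.
- exact: measurable_funeM.
move=> y _.
have -> : \int[mu]_x f2 (x, y) = \int[mu]_x ((\1_(cball d y rho) x : R)%:E * H y).
  by apply: eq_integral => x _; rewrite /f2 indE.
rewrite (int_indic_mul _ _ (cball_meas hS y rho) (H0 y)).
by apply: lee_wpmul2r.
by move=> x _; exact: integral_ge0.
Qed.

End estA.

Section cx.
Context (R : realType).
Lemma csq_ge0 (z : R[i]) : 0 <= csq z.
Proof. by rewrite /csq addr_ge0 // sqr_ge0. Qed.
Lemma csq_scale (a : R) (z : R[i]) : csq (Complex a 0 * z) = a ^+ 2 * csq z.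
Proof. case: z => x y; rewrite /csq /=. ring. Qed.
Lemma Re_scale (a : R) (z : R[i]) : complex.Re (Complex a 0 * z) = a * complex.Re z.
Proof. case: z => x y /=; ring. Qed.
Lemma Im_scale (a : R) (z : R[i]) : complex.Im (Complex a 0 * z) = a * complex.Im z.
Proof. case: z => x y /=; ring. Qed.
Lemma csq0 : csq (0 : R[i]) = 0.
Proof. by rewrite /csq /= expr0n /= addr0. Qed.
End cx.

Section L2lem.
Context (dsp : measure_display) (X : measurableType dsp) (R : realType)
  (mu : {measure set X -> \bar R}).
Local Notation I f := (\int[mu]_y (csq (f y))%:E)%E.

Lemma ind_val (A : set X) (f : X -> R[i]) x : ind A f x = if x \in A then f x else 0.
Proof. by []. Qed.

Lemma csq_ind (A : set X) (f : X -> R[i]) x : csq (ind A f x) = \1_A x * csq (f x).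
Proof. by rewrite ind_val /indic; case: (x \in A); rewrite ?mul1r ?mul0r ?csq0. Qed.

Lemma Re_ind (A : set X) (f : X -> R[i]) x : complex.Re (ind A f x) = \1_A x * complex.Re (f x).
Proof. by rewrite ind_val /indic; case: (x \in A); rewrite ?mul1r ?mul0r. Qed.

Lemma Im_ind (A : set X) (f : X -> R[i]) x : complex.Im (ind A f x) = \1_A x * complex.Im (f x).
Proof. by rewrite ind_val /indic; case: (x \in A); rewrite ?mul1r ?mul0r. Qed.

Lemma cmeas_ind (A : set X) (f : X -> R[i]) : measurable A -> cmeas f -> cmeas (ind A f).
Proof.
move=> mA [h1 h2]; split.
  rewrite (_ : (fun x => _) = (fun x => \1_A x * complex.Re (f x))); last by apply/funext => x; rewrite Re_ind.
  by apply: measurable_funM => //; exact: measurable_indic.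
rewrite (_ : (fun x => _) = (fun x => \1_A x * complex.Im (f x))); last by apply/funext => x; rewrite Im_ind.
by apply: measurable_funM => //; exact: measurable_indic.
Qed.

Lemma cmeas_scale (a : R) (f : X -> R[i]) : cmeas f -> cmeas (fun x => Complex a 0 * f x).
Proof.
move=> [h1 h2]; split.
  rewrite (_ : (fun x => _) = (fun x => a * complex.Re (f x))); last by apply/funext => x; rewrite Re_scale.
  by apply: measurable_funM.
rewrite (_ : (fun x => _) = (fun x => a * complex.Im (f x))); last by apply/funext => x; rewrite Im_scale.
by apply: measurable_funM.
Qed.

Lemma cmeas_q (f : X -> R[i]) : cmeas f -> measurable_fun setT (fun y => (csq (f y))%:E).
Proof.
move=> [h1 h2]; apply/measurable_EFinP; rewrite /csq.
by apply: measurable_funD; apply: measurable_funX.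
Qed.

Lemma I_ind (A : set X) (f : X -> R[i]) :
  I (ind A f) = (\int[mu]_y ((\1_A y)%:E * (csq (f y))%:E))%E.
Proof. by apply: eq_integral => y _; rewrite csq_ind EFinM. Qed.

Lemma I_scale (a : R) (f : X -> R[i]) : cmeas f ->
  I (fun x => Complex a 0 * f x) = ((a ^+ 2)%:E * I f)%E.
Proof.
move=> cf; rewrite -ge0_integralZl_EFin //; last exact: sqr_ge0.
  by apply: eq_integral => y _; rewrite csq_scale EFinM.
  by move=> y _; rewrite lee_fin csq_ge0.
exact: cmeas_q.
Qed.

Lemma I_ge0 (f : X -> R[i]) : (0 <= I f)%E.
Proof. by apply: integral_ge0 => y _; rewrite lee_fin csq_ge0. Qed.

Lemma I_ind_le (A : set X) (f : X -> R[i]) : measurable A -> cmeas f -> (I (ind A f) <= I f)%E.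
Proof.
move=> mA cf; apply: ge0_le_integral => //.
- by move=> y _; rewrite lee_fin csq_ge0.
- exact/cmeas_q/cmeas_ind.
- exact: cmeas_q.
by move=> y _; rewrite lee_fin csq_ind /indic; case: (y \in A) => /=; rewrite ?mul1r ?mul0r ?csq_ge0.
Qed.

End L2lem.

Section oplem.
Context (dsp : measure_display) (X : measurableType dsp) (R : realType)
  (mu : {measure set X -> \bar R}).
Local Notation I f := (\int[mu]_y (csq (f y))%:E)%E.
Local Notation aeq := (Defs.ae_eq mu).

Lemma aeS (P Q : X -> Prop) : (forall x, P x -> Q x) ->
  {ae mu, forall x, P x} -> {ae mu, forall x, Q x}.
Proof. by move=> h; apply: filterS. Qed.

Lemma aeS2 (P Q S : X -> Prop) : (forall x, P x -> Q x -> S x) ->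
  {ae mu, forall x, P x} -> {ae mu, forall x, Q x} -> {ae mu, forall x, S x}.
Proof. by move=> h; apply: filterS2. Qed.

Lemma aeq_trans (f g h : X -> R[i]) : aeq f g -> aeq g h -> aeq f h.
Proof. by apply: aeS2 => x ->. Qed.

Lemma aeq_sym (f g : X -> R[i]) : aeq f g -> aeq g f.
Proof. by apply: aeS => x ->. Qed.

Lemma aeq_refl (f : X -> R[i]) : aeq f f.
Proof. by apply: aeS (@filterT _ _ _) => x. Qed.

Lemma I_aeq (f g : X -> R[i]) : cmeas f -> cmeas g -> aeq f g -> I f = I g.
Proof.
move=> cf cg h; apply: ae_eq_integral => //; [exact: cmeas_q|exact: cmeas_q|].
by apply: aeS h => x /= -> _.
Qed.

Lemma L2_ind (A : set X) (f : X -> R[i]) : measurable A -> L2 mu f -> L2 mu (ind A f).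
Proof.
move=> mA [cf hf]; split; first exact: cmeas_ind.
exact: le_lt_trans (I_ind_le mu A mA cf) hf.
Qed.

Lemma L2_scale (a : R) (f : X -> R[i]) : L2 mu f -> L2 mu (fun x => Complex a 0 * f x).
Proof.
move=> [cf hf]; split; first exact: cmeas_scale.
rewrite I_scale //; have := I_ge0 mu f.
by move: hf; case: (I f) => //= r _ _; rewrite -EFinM ltry.
Qed.

Lemma cmeas0 : cmeas (fun _ : X => (0 : R[i])).
Proof. by split; exact: measurable_cst. Qed.

Lemma L2_0 : L2 mu (fun _ : X => (0 : R[i])).
Proof.
split; first exact: cmeas0.
rewrite (_ : (fun y => _) = (fun _ => 0%E)); last by apply/funext => y; rewrite csq0.
by rewrite integral0 ltry.
Qed.

Variable T : (X -> R[i]) -> (X -> R[i]).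
Hypothesis hT : is_bounded_op mu T.

Lemma T_L2 f : L2 mu f -> L2 mu (T f). Proof. by case: hT => h _ _ _; exact: h. Qed.

Lemma T_aeq f g : L2 mu f -> L2 mu g -> aeq f g -> aeq (T f) (T g).
Proof. by case: hT => _ h _ _; exact: h. Qed.

Lemma T_zero : aeq (T (fun _ => 0)) (fun _ => 0).
Proof.
case: hT => _ _ hlin _.
have := hlin 1 (fun _ => 0) (fun _ => 0) L2_0 L2_0.
rewrite (_ : (fun x => 1 * 0 + 0) = (fun _ => 0)); last by apply/funext => x; rewrite mulr0 addr0.
by apply: aeS => x; rewrite mul1r => h; apply: (addrI (T (fun _ => 0) x)); rewrite addr0.
Qed.

Lemma T_scale (a : R[i]) f : L2 mu f -> aeq (T (fun x => a * f x)) (fun x => a * T f x).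
Proof.
case: hT => _ _ hlin _ hf.
have := hlin a f (fun _ => 0) hf L2_0.
rewrite (_ : (fun x => a * f x + 0) = (fun x => a * f x)); last by apply/funext => x; rewrite addr0.
move=> h; apply: aeS2 h T_zero => x -> ->; by rewrite addr0.
Qed.

Lemma T_add f g : L2 mu f -> L2 mu g -> aeq (T (fun x => f x + g x)) (fun x => T f x + T g x).
Proof.
case: hT => _ _ hlin _ hf hg.
have := hlin 1 f g hf hg.
rewrite (_ : (fun x => 1 * f x + g x) = (fun x => f x + g x)); last by apply/funext => x; rewrite mul1r.
by apply: aeS => x ->; rewrite mul1r.
Qed.

End oplem.

Section B2.
Context (dsp : measure_display) (X : measurableType dsp) (R : realType)
  (mu : {measure set X -> \bar R}).
Local Notation I f := (\int[mu]_y (csq (f y))%:E)%E.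
Local Notation aeq := (Defs.ae_eq mu).

Lemma I_fin (f : X -> R[i]) : L2 mu f -> I f = (fine (I f))%:E.
Proof.
move=> [_ hf]; rewrite fineK // fin_numElt hf andbT.
by apply: (lt_le_trans _ (I_ge0 mu f)); exact: ltNyr.
Qed.

Lemma Iq_ge0 (f : X -> R[i]) : 0 <= fine (I f).
Proof. exact/fine_ge0/I_ge0. Qed.

Lemma norm2_sq (f : X -> R[i]) : norm2 mu f ^+ 2 = fine (I f).
Proof. by rewrite /norm2 sqr_sqrtr // Iq_ge0. Qed.

Lemma norm2_ge0 (f : X -> R[i]) : 0 <= norm2 mu f.
Proof. exact: sqrtr_ge0. Qed.

Lemma norm2_le1 (f : X -> R[i]) : fine (I f) <= 1 -> norm2 mu f <= 1.
Proof. by move=> h; rewrite /norm2 -sqrtr1 ler_sqrt. Qed.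

Lemma B2 (S : (X -> R[i]) -> (X -> R[i])) (eps : R) :
  (forall f, L2 mu f -> L2 mu (S f)) ->
  (exists B, forall f, L2 mu f -> norm2 mu f <= 1 -> norm2 mu (S f) <= B) ->
  (forall (a : R) f, L2 mu f -> aeq (S (fun x => Complex a 0 * f x)) (fun x => Complex a 0 * S f x)) ->
  opnorm mu S < eps -> forall h, L2 mu h -> fine (I (S h)) <= eps ^+ 2 * fine (I h).
Proof.
move=> SL2 [B hB] Ssc hop.
set E := [set norm2 mu (S f) | f in [set f | L2 mu f /\ norm2 mu f <= 1]].
have hub : has_ubound E by exists B => _ [f [f1 f2] <-]; exact: hB.
have key f : L2 mu f -> fine (I f) <= 1 -> fine (I (S f)) < eps ^+ 2.
  move=> Lf If; have n1 := norm2_le1 _ If.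
  have : norm2 mu (S f) <= opnorm mu S by apply: ub_le_sup hub _ _; exists f.
  move=> /le_lt_trans /(_ hop) hlt; rewrite -norm2_sq.
  have := @norm2_ge0 (S f); move: (norm2 mu (S f)) hlt => v h1 h2; nra.
have eps0 : 0 < eps.
  apply: le_lt_trans hop; apply: le_trans (@norm2_ge0 (S (fun _ => 0))) _.
  by apply: ub_le_sup hub _ _; exists (fun _ => 0) => //; split; [exact: L2_0|
     apply: norm2_le1; rewrite (_ : (fun y => _) = fun _ => 0%E) ?integral0 //; apply/funext => y /=; rewrite csq0].
move=> h Lh; apply/ler_addgt0Pr => t t0.
have Ih0 := @Iq_ge0 h.
have e20 : 0 < eps ^+ 2 by rewrite exprn_gt0.
have te : 0 < t / eps ^+ 2 by rewrite divr_gt0.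
set lam := fine (I h) + t / eps ^+ 2.
have lam0 : 0 < lam by rewrite /lam; move: (t / eps ^+ 2) te => w; lra.
set a := (Num.sqrt lam)^-1.
have a2 : a ^+ 2 = lam^-1 by rewrite /a exprVn sqr_sqrtr // ltW.
set h' := fun x => Complex a 0 * h x.
have Lh' : L2 mu h' := L2_scale a Lh.
have Ih' : fine (I h') = a ^+ 2 * fine (I h).
  by rewrite /h' I_scale; [rewrite (I_fin Lh) -EFinM | case: Lh].
have Ih'1 : fine (I h') <= 1.
  rewrite Ih' a2 mulrC ler_pdivrMr // mul1r /lam; move: (t / eps ^+ 2) te => w; lra.
have := key h' Lh' Ih'1.
have LSh := SL2 h Lh.
have : I (S h') = I (fun x => Complex a 0 * S h x).
  apply: I_aeq; [exact: (SL2 _ Lh').1|apply: cmeas_scale; exact: LSh.1|exact: Ssc].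
move=> ->; rewrite I_scale; last exact: LSh.1.
rewrite (I_fin LSh) -EFinM /= a2 => hlt.
have : fine (I (S h)) < eps ^+ 2 * lam.
  by rewrite -ltr_pdivrMr // mulrC.
rewrite /lam mulrDr mulrCA mulfV ?mulr1; last by rewrite gt_eqF.
by move=> /ltW.
Qed.

End B2.

Section B1.
Context (dsp : measure_display) (X : measurableType dsp) (R : realType)
  (mu : {measure set X -> \bar R}).
Local Notation I f := (\int[mu]_y (csq (f y))%:E)%E.
Local Notation aeq := (Defs.ae_eq mu).
Variable T : (X -> R[i]) -> (X -> R[i]).
Hypothesis hT : is_bounded_op mu T.

Lemma norm2_ind_le (C : set X) (g : X -> R[i]) : measurable C -> L2 mu g ->
  norm2 mu (ind C g) <= norm2 mu g.
Proof.
move=> mC Lg; rewrite /norm2 ler_sqrt; last exact: Iq_ge0.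
have := @I_ind_le _ _ _ mu C g mC Lg.1.
by rewrite (I_fin (L2_ind C mC Lg)) (I_fin Lg) lee_fin.
Qed.

Lemma SC_B2 (C : set X) (eps : R) : measurable C ->
  opnorm mu (fun f => ind C (T f)) < eps ->
  forall h, L2 mu h -> fine (I (ind C (T h))) <= eps ^+ 2 * fine (I h).
Proof.
move=> mC hop h Lh.
apply: (@B2 _ _ _ _ (fun f => ind C (T f)) eps) => //.
- by move=> f Lf; apply: L2_ind => //; exact: T_L2.
- case: (hT) => _ _ _ [M hM]; exists `|M| => f Lf n1.
  apply: le_trans (@norm2_ind_le C (T f) mC (T_L2 hT Lf)) _.
  apply: le_trans (hM f Lf) _.
  have := @norm2_ge0 _ _ _ mu f; have := ler_norm M; have := normr_ge0 M.
  move: (norm2 mu f) n1 => n; move: `|M| => m; nra.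
- move=> a f Lf; apply: aeS (T_scale hT (Complex a 0) Lf) => x /= hx.
  by rewrite !ind_val hx; case: (x \in C); rewrite ?mulr0.
Qed.

End B1.

Section B1loc.
Context (dsp : measure_display) (X : measurableType dsp) (R : realType)
  (d : X -> X -> R) (mu : {measure set X -> \bar R}) (hS : standing_assumptions d mu).
Local Notation I f := (\int[mu]_y (csq (f y))%:E)%E.
Local Notation aeq := (Defs.ae_eq mu).
Variable T : (X -> R[i]) -> (X -> R[i]).
Hypothesis hT : is_bounded_op mu T.
Variable r : R.
Hypothesis r0 : 0 < r.
Hypothesis hc : forall F G : set X, mclosed d F -> mclosed d G -> dist_gt d F G r ->
      forall f, L2 mu f -> aeq (ind F (T (ind G f))) (fun _ => 0).

Lemma B1 x eps : opnorm mu (fun f => ind (cball d x 1) (T f)) < eps -> forall f, L2 mu f ->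
  (\int[mu]_z ((\1_(cball d x 1) z)%:E * (csq (T f z))%:E) <=
   (eps ^+ 2)%:E * \int[mu]_z ((\1_(cball d x (r + 2)) z)%:E * (csq (f z))%:E))%E.
Proof.
move=> hop f Lf.
have hm := hmet hS.
set C := cball d x 1.
set B := [set y | d x y < r + 3/2].
set G := [set y | r + 3/2 <= d x y].
have mC : measurable C by exact: (cball_meas hS).
have mB : measurable B by apply: (open_meas hS); exact: mball_open.
have mG : measurable G by apply: (closed_meas hS); exact: mge_closed.
have LG : L2 mu (ind G f) by exact: L2_ind.
have LB : L2 mu (ind B f) by exact: L2_ind.
have fdec : f = (fun y => ind G f y + ind B f y).
  apply/funext => y; rewrite !ind_val.
  case: (pselect (r + 3/2 <= d x y)) => h.
    rewrite (mem_set (h : G y)) memNset ?addr0 //= /B /=; apply/negP; rewrite -leNgt; exact: h.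
  rewrite memNset // (mem_set (_ : B y)) ?add0r //= /B /=; rewrite ltNge; exact/negP.
have dG : dist_gt d C G r.
  exists (r + 1/2); first lra.
  move=> a b; rewrite /C /cball /G /= => ha hb.
  have := mdtri hm x a b; lra.
have h0 := hc (@cball_closed _ _ _ hm x 1) (@mge_closed _ _ _ hm x (r + 3/2)) dG Lf.
have hadd := T_add hT LG LB.
rewrite -fdec in hadd.
have e1 : I (ind C (T f)) = I (ind C (T (ind B f))).
  apply: I_aeq; [apply: cmeas_ind => //; exact: (T_L2 hT Lf).1|
                 apply: cmeas_ind => //; exact: (T_L2 hT LB).1|].
  apply: aeS2 hadd h0 => y /= hy h0y.
  move: h0y; rewrite !ind_val hy; case: (y \in C) => // ->; by rewrite add0r.
rewrite -I_ind e1.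
have := SC_B2 hT C eps mC hop LB.
rewrite (I_fin (L2_ind C mC (T_L2 hT LB))) => hle.
apply: le_trans.
  apply: (@le_trans _ _ ((eps ^+ 2 * fine (I (ind B f)))%:E)); first by rewrite lee_fin.
  by rewrite EFinM -(I_fin LB).
apply: lee_wpmul2l; first by rewrite lee_fin sqr_ge0.
rewrite I_ind; apply: ge0_le_integral => //.
- by move=> y _; rewrite mule_ge0 // lee_fin ?csq_ge0.
- apply: emeasurable_funM; first by apply/measurable_EFinP; exact: measurable_indic.
  exact: cmeas_q Lf.1.
- apply: emeasurable_funM; first by apply/measurable_EFinP; apply: measurable_indic; exact: (cball_meas hS).
  exact: cmeas_q Lf.1.
move=> y _; apply: lee_wpmul2r; first by rewrite lee_fin csq_ge0.
rewrite lee_fin /indic; case: (boolP (y \in B)) => // /set_mem hy.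
rewrite (mem_set (_ : cball d x (r + 2) y)) //; rewrite /cball /=; move: hy; rewrite /B /= => hy; lra.
Qed.

End B1loc.

Unset Implicit Arguments.

Theorem lemma5p4 (dsp : measure_display) (X : measurableType dsp) (R : realType)
  (d : X -> X -> R) (mu : {measure set X -> \bar R}) :
  standing_assumptions d mu ->
  (exists2 c : R, 0 < c & forall x : X, (c%:E <= mu (cball d x (1 / 2)))%E) ->
  forall (T : (X -> R[i]) -> (X -> R[i])) (xi : set_system X),
    in_E mu d T -> controlled_op mu d T -> coarse_filter d xi ->
    (forall e : R, 0 < e ->
       xi [set x | opnorm mu (fun f => ind (cball d x 1) (T f)) < e]) ->
    in_J mu d xi T.
Proof.
move=> hS [c c0 hc] T xi hE hctrl hxi hlim.
split => // e e0.
have hT := hE.1.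
have hm := hmet hS.
case: hctrl => r r0 hcr.
have rho0 : 0 < r + 2 by lra.
have [M0 hM0] := hbound hS (r + 2) rho0.
set M := Num.max M0 1.
have M1 : 1 <= M by rewrite le_max lexx orbT.
have M0M : M0 <= M by rewrite le_max lexx.
set eps := Num.min 1 ((e / 2) ^+ 2 * c / M).
have q0 : 0 < (e / 2) ^+ 2 * c / M.
  by rewrite divr_gt0 ?mulr_gt0 ?exprn_gt0 ?divr_gt0 //; lra.
have eps0 : 0 < eps by rewrite lt_min ltr01 q0.
have eps1 : eps <= 1 by rewrite ge_min lexx.
have epsq : eps <= (e / 2) ^+ 2 * c / M by rewrite ge_min lexx orbT.
have heps : eps ^+ 2 * M / c <= (e / 2) ^+ 2.
  have Mp : 0 < M by lra.
  rewrite ler_pdivrMr // -ler_pdivlMr //.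
  apply: le_trans epsq; rewrite expr2; move: (eps) eps0 eps1 => w w0 w1.
  rewrite -[leRHS]mul1r ler_pM2r //.
set F0 := [set x | opnorm mu (fun f => ind (cball d x 1) (T f)) < eps].
have xF0 : xi F0 := hlim eps eps0.
set F := inner_nbhd d F0 1.
have xF : xi F := hxi.2 F0 1 ltr01 xF0.
have mF : measurable F by apply: (open_meas hS); exact: inner_open.
exists F; split => //.
apply: (@le_lt_trans _ _ (e / 2)); last lra.
apply: ge_sup.
  exists (norm2 mu (ind F (T (fun _ => 0)))); exists (fun _ => 0) => //; split; first exact: L2_0.
  apply: norm2_le1; rewrite (_ : (fun y => _) = fun _ => 0%E) ?integral0 //.
  by apply/funext => y /=; rewrite csq0.
move=> _ [f [Lf nf] <-].
have LTf := T_L2 hT Lf.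
have G0 y : (0 <= (csq (T f y))%:E)%E by rewrite lee_fin csq_ge0.
have H0 y : (0 <= (csq (f y))%:E)%E by rewrite lee_fin csq_ge0.
have key := estA hS c M (eps ^+ 2) (r + 2) (G := fun y => (csq (T f y))%:E)
   (H := fun y => (csq (f y))%:E) F c0 hc (le_trans ler01 M1)
   (fun y => le_trans (hM0 y) (M0M : (M0%:E <= M%:E)%E))
   (sqr_ge0 eps) mF (cmeas_q LTf.1) (cmeas_q Lf.1)
   G0 H0.
have hyp : forall x y, F y -> (d x y <= 1/2)%R ->
    (\int[mu]_z ((\1_(cball d x 1) z)%:E * (csq (T f z))%:E) <=
     (eps ^+ 2)%:E * \int[mu]_z ((\1_(cball d x (r + 2)) z)%:E * (csq (f z))%:E))%E.
  move=> x y Fy dxy; apply: (B1 hS hT hcr) => //.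
  move: Fy => [s s1 hs]; apply: contrapT => nx; have := hs x nx.
  rewrite (mdsym hm y x); lra.
have := key hyp.
rewrite -I_ind (I_fin (L2_ind F mF LTf)) (I_fin Lf) -!EFinM lee_fin => hk.
have If1 : fine (\int[mu]_y (csq (f y))%:E) <= 1.
  rewrite -norm2_sq; have := @norm2_ge0 _ _ _ mu f; move: (norm2 mu f) nf => n; nra.
have Mp : 0 < M by lra.
have K0 : 0 <= eps ^+ 2 * M by rewrite mulr_ge0 // ?sqr_ge0 ?ltW.
have hK : eps ^+ 2 * M <= (e / 2) ^+ 2 * c by rewrite -ler_pdivrMr.
have Q0 := Iq_ge0 mu (ind F (T f)).
have hQ : fine (\int[mu]_y (csq (ind F (T f) y))%:E) <= (e / 2) ^+ 2.
  move: hk Q0 hK If1 K0 (Iq_ge0 mu f).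
  move: (fine (\int[mu]_y (csq (ind F (T f) y))%:E)) (fine (\int[mu]_y (csq (f y))%:E)) (eps ^+ 2 * M) ((e / 2) ^+ 2) => Q P K E2.
  move=> hk Q0 hK If1 K0 P0; nra.
rewrite -norm2_sq in hQ.
have := @norm2_ge0 _ _ _ mu (ind F (T f)); have e2 : 0 < e / 2 by lra.
move: (norm2 mu (ind F (T f))) hQ e2 => n; move: (e / 2) => a; nra.
Qed.
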